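(* For every $\mathrm{CCS}^-$ process $P$ and every $P'$ with $!P\Rightarrow P'$, we have $!P\approx P'$.
   Context: $\mathrm{CCS}^-$ (CCScore without restriction) processes are given by the grammar $P,Q ::= 0 \mid a.P \mid \overline{a}.P \mid P\,|\,Q \mid\ !P$, where $a$ ranges over an infinite set of names. Actions are inputs $a$, outputs $\overline{a}$ (visible actions) and $\tau$. Transitions: $a.P \xrightarrow{a} P$; $\overline{a}.P \xrightarrow{\overline{a}} P$; if $P\xrightarrow{\gamma}P'$ then $P|Q\xrightarrow{\gamma}P'|Q$ and $Q|P\xrightarrow{\gamma}Q|P'$; if $P\xrightarrow{\overline a}P'$ and $Q\xrightarrow{a}Q'$ then $P|Q\xrightarrow{\tau}P'|Q'$ and $Q|P\xrightarrow{\tau}Q'|P'$; if $P\xrightarrow{\gamma}P'$ then $!P\xrightarrow{\gamma}P'\,|\,!P$; if $P\xrightarrow{a}P'$ and $P\xrightarrow{\overline a}P''$ then $!P\xrightarrow{\tau}P'|P''|\,!P$. $\Rightarrow$ is the reflexive transitive closure of $\xrightarrow{\tau}$; $\stackrel{\hat\alpha}{\Rightarrow}$ is $\Rightarrow$ if $\alpha=\tau$ and $\Rightarrow\xrightarrow{\alpha}\Rightarrow$ otherwise. A process is divergent if it has an infinite sequence of $\tau$-transitions; a relation $\mathcal R$ is divergence-sensitive if $P\,\mathcal R\,Q$ implies ($P$ divergent iff $Q$ divergent). Weak bisimilarity $\approx$ is the union of all symmetric divergence-sensitive relations $\mathcal R$ such that $P\,\mathcal R\,Q$ and $P\xrightarrow{\alpha}P'$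 imply $Q\stackrel{\hat\alpha}{\Rightarrow}Q'$ for some $Q'$ with $P'\,\mathcal R\,Q'$. *)

(* Defs.v *)
From Stdlib Require Import Relations.

Definition name := nat.

Inductive proc : Type :=
| Nil : proc
| In : name -> proc -> proc
| Out : name -> proc -> proc
| Par : proc -> proc -> proc
| Bang : proc -> proc.

Inductive act : Type :=
| AIn : name -> act
| AOut : name -> act
| Tau : act.

Inductive step : proc -> act -> proc -> Prop :=
| s_in : forall a P, step (In a P) (AIn a) P
| s_out : forall a P, step (Out a P) (AOut a) P
| s_parL : forall P Q P' g, step P g P' -> step (Par P Q) g (Par P' Q)
| s_parR : forall P Q P' g, step P g P' -> step (Par Q P) g (Par Q P')
| s_comL : forall P Q P' Q' a,
    step P (AOut a) P' -> step Q (AIn a) Q' -> step (Par P Q) Tau (Par P' Q')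
| s_comR : forall P Q P' Q' a,
    step P (AOut a) P' -> step Q (AIn a) Q' -> step (Par Q P) Tau (Par Q' P')
| s_rep : forall P P' g, step P g P' -> step (Bang P) g (Par P' (Bang P))
| s_repcom : forall P P' P'' a,
    step P (AIn a) P' -> step P (AOut a) P'' ->
    step (Bang P) Tau (Par (Par P' P'') (Bang P)).

Definition tau_step (P Q : proc) : Prop := step P Tau Q.
Definition wtau : proc -> proc -> Prop := clos_refl_trans proc tau_step.

Definition wstep_hat (P : proc) (al : act) (Q : proc) : Prop :=
  match al with
  | Tau => wtau P Q
  | _ => exists P1 P2, wtau P P1 /\ step P1 al P2 /\ wtau P2 Q
  end.

Definition divergent (P : proc) : Prop :=
  exists f : nat -> proc, f 0 = P /\ forall n, step (f n) Tau (f (S n)).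

Definition symmetric_rel (R : proc -> proc -> Prop) : Prop :=
  forall P Q, R P Q -> R Q P.

Definition div_sensitive (R : proc -> proc -> Prop) : Prop :=
  forall P Q, R P Q -> (divergent P <-> divergent Q).

Definition weak_sim (R : proc -> proc -> Prop) : Prop :=
  forall P Q, R P Q -> forall al P', step P al P' ->
    exists Q', wstep_hat Q al Q' /\ R P' Q'.

Definition wbisim (P Q : proc) : Prop :=
  exists R : proc -> proc -> Prop,
    symmetric_rel R /\ div_sensitive R /\ weak_sim R /\ R P Q.

(* Main.v *)
Require Import Defs.
From Stdlib Require Import Relations IndefiniteDescription.

Inductive cong : proc -> proc -> Prop :=
| c_refl A : cong A A
| c_sym A B : cong A B -> cong B A
| c_trans A B C : cong A B -> cong B C -> cong A C
| c_comm A B : cong (Par A B) (Par B A)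
| c_assoc A B C : cong (Par (Par A B) C) (Par A (Par B C))
| c_nil A : cong (Par Nil A) A
| c_par A A' B : cong A A' -> cong (Par A B) (Par A' B).

Definition sim1 (A B : proc) : Prop :=
  forall al A', step A al A' -> exists B', step B al B' /\ cong A' B'.

Lemma sim1_trans A B C : sim1 A B -> sim1 B C -> sim1 A C.
Proof.
  intros H1 H2 al A' HA. destruct (H1 _ _ HA) as [B' [HB cB]].
  destruct (H2 _ _ HB) as [C' [HC cC]]. exists C'. split; auto.
  eapply c_trans; eauto.
Qed.

Lemma sim1_comm A B : sim1 (Par A B) (Par B A).
Proof.
  intros al X H; inversion H; subst.
  - eexists; split; [apply s_parR; eauto | apply c_comm].
  - eexists; split; [apply s_parL; eauto | apply c_comm].
  - eexists; split; [eapply s_comR; eauto | apply c_comm].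
  - eexists; split; [eapply s_comL; eauto | apply c_comm].
Qed.

Lemma sim1_assoc A B C : sim1 (Par (Par A B) C) (Par A (Par B C)).
Proof.
  intros al X H; inversion H; subst.
  - match goal with H0 : step (Par A B) _ _ |- _ => inversion H0; subst end.
    + eexists; split; [apply s_parL; eauto | apply c_assoc].
    + eexists; split; [apply s_parR; apply s_parL; eauto | apply c_assoc].
    + eexists; split; [eapply s_comL; [eauto | apply s_parL; eauto] | apply c_assoc].
    + eexists; split; [eapply s_comR; [apply s_parL; eauto | eauto] | apply c_assoc].
  - eexists; split; [apply s_parR; apply s_parR; eauto | apply c_assoc].
  - match goal with H0 : step (Par A B) (AOut _) _ |- _ => inversion H0; subst end.
    + eexists; split; [eapply s_comL; [eauto | apply s_parR; eauto] | apply c_assoc].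
    + eexists; split; [apply s_parR; eapply s_comL; eauto | apply c_assoc].
  - match goal with H0 : step (Par A B) (AIn _) _ |- _ => inversion H0; subst end.
    + eexists; split; [eapply s_comR; [apply s_parR; eauto | eauto] | apply c_assoc].
    + eexists; split; [apply s_parR; eapply s_comR; eauto | apply c_assoc].
Qed.

Lemma sim1_assoc' A B C : sim1 (Par A (Par B C)) (Par (Par A B) C).
Proof.
  eapply sim1_trans; [apply sim1_comm|].
  eapply sim1_trans; [apply sim1_assoc|].
  eapply sim1_trans; [apply sim1_comm|].
  eapply sim1_trans; [apply sim1_assoc|].
  apply sim1_comm.
Qed.

Lemma sim1_par A A' B : cong A A' -> sim1 A A' -> sim1 (Par A B) (Par A' B).
Proof.
  intros c H al X HX; inversion HX; subst.
  - match goal with H0 : step A _ _ |- _ => destruct (H _ _ H0) as [Y [HY cY]] end.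
    eexists; split; [apply s_parL; eauto | apply c_par; auto].
  - eexists; split; [apply s_parR; eauto | apply c_par; auto].
  - match goal with H0 : step A _ _ |- _ => destruct (H _ _ H0) as [Y [HY cY]] end.
    eexists; split; [eapply s_comL; eauto| apply c_par; auto].
  - match goal with H0 : step A _ _ |- _ => destruct (H _ _ H0) as [Y [HY cY]] end.
    eexists; split; [eapply s_comR; eauto| apply c_par; auto].
Qed.

Lemma cong_sim A B : cong A B -> sim1 A B /\ sim1 B A.
Proof.
  induction 1.
  - split; intros al X HX; exists X; split; auto using c_refl.
  - tauto.
  - destruct IHcong1, IHcong2; split; eapply sim1_trans; eauto.
  - split; apply sim1_comm.
  - split; [apply sim1_assoc | apply sim1_assoc'].
  - split; intros al X HX.
    + inversion HX; subst;
        try (match goal with H0 : step Nil _ _ |- _ => inversion H0 end).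
      exists P'; split; auto. apply c_nil.
    + exists (Par Nil X); split; [apply s_parR; auto | apply c_sym, c_nil].
  - destruct IHcong; split; apply sim1_par; auto using c_sym.
Qed.

Lemma cong_parR Y A A' : cong A A' -> cong (Par Y A) (Par Y A').
Proof.
  intro c. eapply c_trans; [apply c_comm|]. eapply c_trans; [apply c_par; eauto|].
  apply c_comm.
Qed.

Lemma cong_swap W Y Z : cong (Par W (Par Y Z)) (Par Y (Par W Z)).
Proof.
  eapply c_trans; [apply c_sym, c_assoc|].
  eapply c_trans; [apply c_par, c_comm|]. apply c_assoc.
Qed.

Lemma bang_form P al M : step (Bang P) al M -> exists Z, M = Par Z (Bang P).
Proof. intro H; inversion H; subst; eauto. Qed.

Lemma L_step W P al A' : step (Par W (Bang P)) al A' ->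
  exists W', cong A' (Par W' (Bang P)).
Proof.
  intro H; inversion H; subst.
  - eexists; apply c_refl.
  - match goal with Hb : step (Bang P) _ _ |- _ => destruct (bang_form _ _ _ Hb) as [Z ->] end.
    eexists; apply c_sym, c_assoc.
  - match goal with Hb : step (Bang P) _ _ |- _ => destruct (bang_form _ _ _ Hb) as [Z ->] end.
    eexists; apply c_sym, c_assoc.
  - match goal with Hb : step (Bang P) _ _ |- _ => destruct (bang_form _ _ _ Hb) as [Z ->] end.
    eexists; apply c_sym, c_assoc.
Qed.

Lemma L_gen A W P al A' : cong A (Par W (Bang P)) -> step A al A' ->
  exists W', cong A' (Par W' (Bang P)).
Proof.
  intros c H. destruct (proj1 (cong_sim _ _ c) _ _ H) as [B' [HB cB]].
  destruct (L_step _ _ _ _ HB) as [W' cW]. exists W'. eapply c_trans; eauto.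
Qed.

Lemma wtau_par W A B : wtau A B -> wtau (Par W A) (Par W B).
Proof.
  induction 1.
  - apply rt_step. unfold tau_step. apply s_parR. exact H.
  - apply rt_refl.
  - eapply rt_trans; eauto.
Qed.

Lemma wtau_cong X X' Y : cong X X' -> wtau X Y -> exists Y', wtau X' Y' /\ cong Y Y'.
Proof.
  intros c H; revert X' c; induction H; intros X' c.
  - destruct (proj1 (cong_sim _ _ c) _ _ H) as [B' [HB cB]].
    exists B'; split; auto. apply rt_step; exact HB.
  - exists X'; split; auto. apply rt_refl.
  - destruct (IHclos_refl_trans1 _ c) as [Y1 [H1 c1]].
    destruct (IHclos_refl_trans2 _ c1) as [Y2 [H2 c2]].
    exists Y2; split; auto. eapply rt_trans; eauto.
Qed.

Lemma wstep_of A A1 al A2 : wtau A A1 -> step A1 al A2 -> wstep_hat A al A2.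
Proof.
  intros H1 H2. destruct al; simpl.
  - exists A1, A2; repeat split; auto. apply rt_refl.
  - exists A1, A2; repeat split; auto. apply rt_refl.
  - eapply rt_trans; [exact H1|]. apply rt_step; exact H2.
Qed.

Lemma div_coind (Sp : proc -> Prop) :
  (forall x, Sp x -> exists y, step x Tau y /\ Sp y) -> forall x, Sp x -> divergent x.
Proof.
  intros H x Hx.
  assert (H' : forall s : {x | Sp x}, {y : {x | Sp x} | step (proj1_sig s) Tau (proj1_sig y)}).
  { intros [z Hz]. destruct (constructive_indefinite_description _ (H z Hz)) as [y [Hy Sy]].
    exists (exist _ y Sy). exact Hy. }
  set (F := fix F n : {x | Sp x} := match n with 0 => exist _ x Hx | S m => proj1_sig (H' (F m)) end).
  exists (fun n => proj1_sig (F n)). split; [reflexivity|].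
  intro n. simpl. exact (proj2_sig (H' (F n))).
Qed.

Lemma div_shift x : divergent x -> exists y, step x Tau y /\ divergent y.
Proof.
  intros [f [H0 H]]. exists (f 1). split.
  - rewrite <- H0. apply H.
  - exists (fun n => f (S n)). split; auto.
Qed.

Lemma div_cong x y : cong x y -> divergent x -> divergent y.
Proof.
  intros c d. apply (div_coind (fun y => exists x, cong x y /\ divergent x)); eauto.
  intros z [w [cw dw]]. destruct (div_shift _ dw) as [w' [Hw dw']].
  destruct (proj1 (cong_sim _ _ cw) _ _ Hw) as [z' [Hz cz]]. eauto.
Qed.

Lemma div_par Y x : divergent x -> divergent (Par Y x).
Proof.
  intros [f [H0 H]]. exists (fun n => Par Y (f n)). split.
  - rewrite H0; reflexivity.
  - intro n. apply s_parR. apply H.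
Qed.

Lemma div_pre A A1 : wtau A A1 -> divergent A1 -> divergent A.
Proof.
  intro H. apply clos_rt_rt1n in H. induction H; auto.
  intro d. specialize (IHclos_refl_trans_1n d). destruct IHclos_refl_trans_1n as [f [Hf0 Hf]].
  exists (fun n => match n with 0 => x | S m => f m end). split; auto.
  intros [|n]; simpl; [rewrite Hf0; exact H | apply Hf].
Qed.

Definition reach (P X : proc) : Prop := exists C, wtau (Bang P) C /\ cong C X.

Definition R0 (A B : proc) : Prop :=
  exists P W Y, cong A (Par W (Bang P)) /\ cong B (Par W (Par Y (Bang P))) /\
                reach P (Par Y (Bang P)).

Definition Rel (A B : proc) : Prop := R0 A B \/ R0 B A.

Lemma R0_B A B P W Y : cong A (Par W (Bang P)) -> cong B (Par W (Par Y (Bang P))) ->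
  cong B (Par Y A).
Proof.
  intros cA cB. eapply c_trans; [exact cB|]. eapply c_trans; [apply cong_swap|].
  apply cong_parR, c_sym, cA.
Qed.

Lemma R0_A A B P W Y : cong A (Par W (Bang P)) -> cong B (Par W (Par Y (Bang P))) ->
  reach P (Par Y (Bang P)) -> exists A1, wtau A A1 /\ cong A1 B.
Proof.
  intros cA cB [C [HC cC]].
  destruct (wtau_cong _ _ _ (c_sym _ _ cA) (wtau_par W _ _ HC)) as [A1 [H1 c1]].
  exists A1; split; auto. eapply c_trans; [apply c_sym, c1|].
  eapply c_trans; [apply cong_parR, cC|]. apply c_sym, cB.
Qed.

Lemma reach_nil P : reach P (Par Nil (Bang P)).
Proof. exists (Bang P); split; [apply rt_refl | apply c_sym, c_nil]. Qed.

Lemma R0_div A B : R0 A B -> (divergent A <-> divergent B).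
Proof.
  intros [P [W [Y [cA [cB r]]]]]. split; intro d.
  - apply (div_cong (Par Y A)); [apply c_sym; eapply R0_B; eauto | apply div_par, d].
  - destruct (R0_A _ _ _ _ _ cA cB r) as [A1 [H1 c1]].
    eapply div_pre; [exact H1|]. eapply div_cong; [apply c_sym, c1 | exact d].
Qed.

Lemma R0_fwd A B : R0 A B -> forall al A', step A al A' ->
  exists B', wstep_hat B al B' /\ Rel A' B'.
Proof.
  intros [P [W [Y [cA [cB r]]]]] al A' H.
  destruct (L_gen _ _ _ _ _ cA H) as [W' cW'].
  assert (cBY := R0_B _ _ _ _ _ cA cB).
  destruct (proj2 (cong_sim _ _ cBY) _ _ (s_parR _ _ _ _ H)) as [B' [HB cB']].
  exists B'; split; [eapply wstep_of; [apply rt_refl | exact HB]|].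
  left. exists P, W', Y; repeat split; auto.
  eapply c_trans; [apply c_sym, cB'|]. eapply c_trans; [apply cong_parR, cW'|].
  apply cong_swap.
Qed.

Lemma R0_bwd A B : R0 B A -> forall al A', step A al A' ->
  exists B', wstep_hat B al B' /\ Rel A' B'.
Proof.
  intros [P [W [Y [cB [cA r]]]]] al A' H.
  destruct (R0_A _ _ _ _ _ cB cA r) as [B1 [H1 c1]].
  destruct (proj2 (cong_sim _ _ c1) _ _ H) as [B2 [HB2 c2]].
  assert (cA2 : cong A (Par (Par W Y) (Bang P))) by (eapply c_trans; [exact cA | apply c_sym, c_assoc]).
  destruct (L_gen _ _ _ _ _ cA2 H) as [W' cW'].
  exists B2; split; [eapply wstep_of; eauto|].
  left. exists P, W', Nil; repeat split; auto using reach_nil.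
  eapply c_trans; [apply c_sym, c2|]. eapply c_trans; [exact cW'|].
  apply cong_parR, c_sym, c_nil.
Qed.

Lemma reach_form P P' : wtau (Bang P) P' -> exists Y, cong P' (Par Y (Bang P)).
Proof.
  intro H. apply clos_rt_rtn1 in H. induction H.
  - exists Nil. apply c_sym, c_nil.
  - destruct IHclos_refl_trans_n1 as [Y cY]. eapply L_gen; eauto.
Qed.

Theorem mainTheorem11 : forall P P' : proc,
  wtau (Bang P) P' -> wbisim (Bang P) P'.
Proof.
  intros P P' H. exists Rel. split; [|split; [|split]].
  - intros A B [h|h]; [right|left]; exact h.
  - intros A B [h|h]; [apply (R0_div _ _ h) | symmetry; apply (R0_div _ _ h)].
  - intros A B [h|h]; [apply R0_fwd | apply R0_bwd]; exact h.
  - left. destruct (reach_form _ _ H) as [Y cY]. exists P, Nil, Y; repeat split.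
    + apply c_sym, c_nil.
    + eapply c_trans; [exact cY | apply c_sym, c_nil].
    + exists P'; split; auto.
Qed.
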